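(* Assume $f_6=1$ and $\theta_i\ne0$. For every point $\xi\in\mathbb P^3$, the plane with dual coordinates $W_i(\xi)=A_i\xi$ is the polar plane of $\xi$ with respect to the linear complex $\mathcal L_i$; that is, it passes through $\xi$, and a line through $\xi$ lies in this plane if and only if it belongs to $\mathcal L_i$.
   Context: Work over an algebraically closed field of characteristic $\neq2$. $F(X)=\sum_{j=0}^6f_jX^j=\prod_{j=1}^6(X-\theta_j)$ with distinct roots. $A_i$ is the antisymmetric matrix $$A_i=\begin{pmatrix}0&-f_1-\frac{2f_0}{\theta_i}&a_{13}&\theta_i^2\\ f_1+\frac{2f_0}{\theta_i}&0&\theta_i^2(f_5+2\theta_i)&-\theta_i\\ -a_{13}&-\theta_i^2(f_5+2\theta_i)&0&1\\ -\theta_i^2&\theta_i&-1&0\end{pmatrix},\quad a_{13}=\theta_i(f_3+2f_4\theta_i+2f_5\theta_i^2+2\theta_i^3),$$ and $W_i(\xi)=A_i\xi$ ($\xi$ a column vector) is read as dual coordinates of a plane $\sum_j w_j\xi_j=0$. Lines in $\mathbb P^3$ have Grassmann coordinates $(X_1:\dots:X_6)=(p_{43}:p_{24}:p_{41}:p_{21}:p_{31}:p_{32})$, $p_{jl}=u_jv_l-u_lv_j$ for the line through $u,v$. Define the linear forms $p_0=X_1+f_1X_4$, $p_1=X_2+2f_2X_4+f_3X_5$, $p_2=X_3+2f_4X_5+2f_3X_4+f_5X_6$, $p_3=2f_4X_4+2f_5X_5+2X_6$, $p_4=2f_5X_4+2X_5$, $p_5=2X_4$. The linear complex $\mathcal L_i$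 is the set of lines whose Grassmann coordinates satisfy $\sum_{j=0}^5p_j\theta_i^j=0$. The polar plane of a point $\xi$ with respect to a linear complex is the plane containing all lines of the complex through $\xi$. *)

(* Defs.v *)
From HB Require Import structures.
From mathcomp Require Import all_boot all_order all_algebra.
Set Implicit Arguments. Unset Strict Implicit. Unset Printing Implicit Defensive.
Import GRing.Theory.
Local Open Scope ring_scope.

Section LinearComplex.
Variable K : fieldType.

(* 1-based coordinate xi_j of a point of P^3 given by a column vector in K^4 *)
Definition vc (u : 'cV[K]_4) (j : nat) : K := u (inord j.-1) 0.

Definition pl (u v : 'cV[K]_4) (j l : nat) : K :=
  vc u j * vc v l - vc u l * vc v j.

Definition grX (u v : 'cV[K]_4) (k : nat) : K :=
  match k with
  | 1 => pl u v 4 3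
  | 2 => pl u v 2 4
  | 3 => pl u v 4 1
  | 4 => pl u v 2 1
  | 5 => pl u v 3 1
  | _ => pl u v 3 2
  end.

(* the linear forms p_0, ..., p_5, with f_j = F`_j *)
Definition pform (F : {poly K}) (u v : 'cV[K]_4) (j : nat) : K :=
  let X := grX u v in
  match j with
  | 0 => X 1 + F`_1 * X 4
  | 1 => X 2 + 2%:R * F`_2 * X 4 + F`_3 * X 5
  | 2 => X 3 + 2%:R * F`_4 * X 5 + 2%:R * F`_3 * X 4 + F`_5 * X 6
  | 3 => 2%:R * F`_4 * X 4 + 2%:R * F`_5 * X 5 + 2%:R * X 6
  | 4 => 2%:R * F`_5 * X 4 + 2%:R * X 5
  | _ => 2%:R * X 4
  end.

Definition in_complex (F : {poly K}) (t : K) (u v : 'cV[K]_4) : Prop :=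
  \sum_(j < 6) pform F u v j * t ^+ j = 0.

Definition a13 (F : {poly K}) (t : K) : K :=
  t * (F`_3 + 2%:R * F`_4 * t + 2%:R * F`_5 * t ^+ 2 + 2%:R * t ^+ 3).

Definition Aentry (F : {poly K}) (t : K) (r c : nat) : K :=
  match r, c with
  | 1, 2 => - F`_1 - 2%:R * F`_0 / t
  | 1, 3 => a13 F t
  | 1, 4 => t ^+ 2
  | 2, 1 => F`_1 + 2%:R * F`_0 / t
  | 2, 3 => t ^+ 2 * (F`_5 + 2%:R * t)
  | 2, 4 => - t
  | 3, 1 => - a13 F t
  | 3, 2 => - (t ^+ 2 * (F`_5 + 2%:R * t))
  | 3, 4 => 1
  | 4, 1 => - t ^+ 2
  | 4, 2 => t
  | 4, 3 => -1
  | _, _ => 0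
  end.

Definition Amat (F : {poly K}) (t : K) : 'M[K]_4 :=
  \matrix_(r < 4, c < 4) Aentry F t r.+1 c.+1.

Definition on_plane (w x : 'cV[K]_4) : Prop :=
  \sum_(j < 4) w j 0 * x j 0 = 0.

End LinearComplex.

(* Main.v *)
Require Import Defs.
From HB Require Import structures.
From mathcomp Require Import all_boot all_order all_algebra.
From Stdlib Require Import Ring.
Import GRing.Theory.
Local Open Scope ring_scope.

Section R.
Variable K : fieldType.
Definition kadd (x y : K) : K := x + y.
Definition kmul (x y : K) : K := x * y.
Definition kopp (x : K) : K := - x.
Definition ksub (x y : K) : K := kadd x (kopp y).
Definition kz : K := 0.
Definition ko : K := 1.
Lemma Kth : @ring_theory K kz ko kadd kmul ksub kopp eq.
Proof.
rewrite /kadd /kmul /ksub /kopp /kadd /kz /ko.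
constructor; move=> *; rewrite ?add0r ?addrA ?mul1r ?mulrA ?mulrDl ?subrr //;
  try apply: addrC; try apply: mulrC.
Qed.
Add Ring Kring : Kth.
Lemma kaddE (x y : K) : x + y = kadd x y. Proof. by []. Qed.
Lemma kmulE (x y : K) : x * y = kmul x y. Proof. by []. Qed.
Lemma koppE (x : K) : - x = kopp x. Proof. by []. Qed.
Lemma kzE : 0 = kz :> K. Proof. by []. Qed.
Lemma koE : 1 = ko :> K. Proof. by []. Qed.
Lemma twoE : 2%:R = 1 + 1 :> K. Proof. by []. Qed.
Ltac kring := rewrite ?twoE; rewrite ?kaddE ?kmulE ?koppE ?kzE ?koE; lazymatch goal with |- @eq _ ?a ?b => change (@eq K a b) end; ring.
Lemma sum4 (g : 'I_4 -> K) :
  \sum_(j<4) g j = g (inord 0) + g (inord 1) + g (inord 2) + g (inord 3).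
Proof.
rewrite !big_ord_recr big_ord0 /= add0r.
by congr (_+_+_+_); congr g; apply/val_inj; rewrite /= inordK.
Qed.

Lemma key (F : {poly K}) (t : K) (u v : 'cV[K]_4)
  (Ht : t != 0) (f6 : F`_6 = 1)
  (Hs : \sum_(j < 7) F`_j * t ^+ j = 0) :
  \sum_(j < 4) (Amat F t *m u) j 0 * v j 0 = \sum_(j < 6) pform F u v j * t ^+ j.
Proof.
rewrite !big_ord_recr !big_ord0 /= f6 in Hs.
rewrite sum4 !mxE !sum4 !mxE !inordK //.
rewrite !big_ord_recr big_ord0 /=.
rewrite /Aentry /a13 /pform /grX /pl /vc /=.
move: (F`_0) (F`_1) (F`_2) (F`_3) (F`_4) (F`_5) Hs => f0 f1 f2 f3 f4 f5 Hs.
move: (u (inord 0) 0) (u (inord 1) 0) (u (inord 2) 0) (u (inord 3) 0) => u0 u1 u2 u3.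
move: (v (inord 0) 0) (v (inord 1) 0) (v (inord 2) 0) (v (inord 3) 0) => v0 v1 v2 v3.
set S := f1 + f2 * t + f3 * (t * t) + f4 * (t * (t * t)) + f5 * (t * (t * (t * t))) + t * (t * (t * (t * t))).
have E : f0 + t * S = 0.
  rewrite -Hs /S; rewrite !expr2 !exprS !expr0; kring.
have H0 : f0 = - (t * S) by apply/eqP; rewrite -addr_eq0; apply/eqP.
have H1 : 2%:R * f0 / t = - (2%:R * S).
  rewrite H0 mulrN mulNr; congr (- _).
  by rewrite [t * S]mulrC mulrA mulfK.
rewrite H1 /S.
rewrite !expr2 !exprS !expr0; kring.
Qed.

End R.

Theorem mainTheorem7 (K : closedFieldType) (char2 : (2%:R : K) != 0)
  (F : {poly K}) (theta : 'I_6 -> K)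
  (theta_inj : injective theta)
  (F_def : F = \prod_(j < 6) ('X - (theta j)%:P))
  (f6 : F`_6 = 1)
  (i : 'I_6) (theta_nz : theta i != 0)
  (xi : 'cV[K]_4) (xi_nz : xi != 0) :
  let W := Amat F (theta i) *m xi in
  on_plane W xi /\
  (forall v : 'cV[K]_4, \rank (row_mx xi v) = 2%N ->
     ((on_plane W xi /\ on_plane W v) <-> in_complex F (theta i) xi v)).
Proof.
move=> W.
have Hsz : (size F <= 7)%N.
  by rewrite F_def size_prod_XsubC [index_enum _]unlock -enumT size_enum_ord.
have Hr : F.[theta i] = 0.
  by rewrite F_def (bigD1 i) //= hornerM hornerXsubC subrr mul0r.
have Hs : \sum_(j < 7) F`_j * theta i ^+ j = 0 by rewrite -horner_coef_wide.
have HW : forall v, on_plane W v <-> in_complex F (theta i) xi v.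
  by move=> v; rewrite /on_plane /in_complex /W key.
have Hxi : on_plane W xi.
  apply/HW; rewrite /in_complex; apply: big1 => j _.
  have pl0 : forall a b, pl xi xi a b = 0 by move=> a b; rewrite /pl mulrC subrr.
  case: j => [[|[|[|[|[|[|j]]]]]]] Hj //=; rewrite /pform /grX !pl0;
    by rewrite ?(mulr0, addr0, mul0r).
split=> // v _; split; first by case=> _ /HW.
by move=> /HW H; split.
Qed.
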